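(* Let $I$ be an ideal of a metric Hom-Jacobi-Jordan algebra $(J,[\cdot,\cdot],\alpha,B)$. Then (1) $I^{\perp}$ is an ideal of $J$; (2) the centralizer $\mathfrak Z(I)$ of $I$ contains $I^{\perp}$.
   Context: A Hom-Jacobi-Jordan algebra is $(J,[\cdot,\cdot],\alpha)$ with $[\cdot,\cdot]$ symmetric bilinear, $\alpha$ linear and $[\alpha(x),[y,z]]+[\alpha(y),[z,x]]+[\alpha(z),[x,y]]=0$. A metric Hom-Jacobi-Jordan algebra is such an algebra with a nondegenerate symmetric bilinear form $B$ satisfying $B(x,[y,z])=B([x,y],z)$ and $B(\alpha(x),y)=B(x,\alpha(y))$. An ideal is a subspace $I$ with $[x,y]\in I$ and $\alpha(x)\in I$ for all $x\in I$, $y\in J$. $I^\perp=\{x\in J: B(x,y)=0\ \forall y\in I\}$, and $\mathfrak Z(I)=\{x\in J:[x,y]=0\ \forall y\in I\}$. *)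

(* Defs.v *)
From HB Require Import structures.
From mathcomp Require Import all_boot all_order all_algebra.
Set Implicit Arguments. Unset Strict Implicit. Unset Printing Implicit Defensive.
Import GRing.Theory.
Local Open Scope ring_scope.

Definition bilinear_map (K : fieldType) (J : lmodType K) (T : lmodType K)
  (f : J -> J -> T) : Prop :=
  (forall a x y z, f (a *: x + y) z = a *: f x z + f y z) /\
  (forall a x y z, f x (a *: y + z) = a *: f x y + f x z).

Definition linear_map (K : fieldType) (J : lmodType K) (f : J -> J) : Prop :=
  forall a x y, f (a *: x + y) = a *: f x + f y.

Definition HomJacobiJordan (K : fieldType) (J : lmodType K)
  (br : J -> J -> J) (alpha : J -> J) : Prop :=
  [/\ bilinear_map br,
      (forall x y, br x y = br y x),
      linear_map alpha &
      (forall x y z, br (alpha x) (br y z) + br (alpha y) (br z x)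
                     + br (alpha z) (br x y) = 0)].

Definition metricHJJ (K : fieldType) (J : lmodType K)
  (br : J -> J -> J) (alpha : J -> J) (B : J -> J -> K^o) : Prop :=
  HomJacobiJordan br alpha /\
  bilinear_map B /\
  (forall x y, B x y = B y x) /\
  (forall x, (forall y, B x y = 0) -> x = 0) /\
  (forall x y z, B x (br y z) = B (br x y) z) /\
  (forall x y, B (alpha x) y = B x (alpha y)).

Definition subspace (K : fieldType) (J : lmodType K) (I : J -> Prop) : Prop :=
  [/\ I 0, (forall x y, I x -> I y -> I (x + y)) &
      (forall a x, I x -> I (a *: x))].

Definition ideal (K : fieldType) (J : lmodType K)
  (br : J -> J -> J) (alpha : J -> J) (I : J -> Prop) : Prop :=
  [/\ subspace I,
      (forall x y, I x -> I (br x y)) &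
      (forall x, I x -> I (alpha x))].

Definition orth (K : fieldType) (J : lmodType K) (B : J -> J -> K^o)
  (I : J -> Prop) : J -> Prop :=
  fun x => forall y, I y -> B x y = 0.

Definition centralizer (K : fieldType) (J : lmodType K) (br : J -> J -> J)
  (I : J -> Prop) : J -> Prop :=
  fun x => forall y, I y -> br x y = 0.

(* Main.v *)
Require Import Defs.
From mathcomp Require Import all_boot all_order all_algebra.
Import GRing.Theory.
Local Open Scope ring_scope.

Theorem proposition6p4 (K : fieldType) (J : lmodType K)
  (br : J -> J -> J) (alpha : J -> J) (B : J -> J -> K^o) (I : J -> Prop) :
  metricHJJ br alpha B -> ideal br alpha I ->
  ideal br alpha (orth B I) /\ (forall x, orth B I x -> centralizer br I x).
Proof.
move=> [[[_ _] brC _ _] [[Bl _] [BC [Bnd [Binv Balpha]]]]] [[I0 ID IZ] Ibr Ia].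
have B0 : forall y, B 0 y = 0.
  move=> y; have := Bl 1 0 0 y; rewrite !scale1r addr0.
  by move/(congr1 (fun t => t - B 0 y)); rewrite addrK subrr.
split; last first.
  move=> x Hx y Hy; apply: Bnd => z.
  by rewrite -Binv; apply: Hx; apply: Ibr.
split.
- split.
  + by move=> y _; apply: B0.
  + move=> x y Hx Hy z Hz; have := Bl 1 x y z.
    by rewrite !scale1r Hx // Hy // addr0.
  + move=> a x Hx z Hz; have := Bl a x 0 z.
    by rewrite addr0 Hx // B0 addr0 scaler0.
- move=> x y Hx z Hz; rewrite -Binv brC; apply: Hx; exact: Ibr.
- move=> x Hx z Hz; rewrite Balpha; apply: Hx; exact: Ia.
Qed.
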